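(* Let an independent instance with $k$ signals ($2\le k\le n$) be $\rho_E$-optimal and let $\varphi^*$ be an optimal scheme with $k$ signals. Then ActionsGreedy computes a set $S\subseteq[n-1]$ of $k-1$ actions with \[f(S)\ge\Big(1-\big(1-\tfrac1k\big)^{k-1}\Big)u_{\mathcal S}(\varphi^* ).\]
   Context: Bayesian persuasion: receiver chooses one of actions $[n]$; the sender sends one of $k$ signals according to a committed scheme; receiver best-responds (ties in favor of sender); optimal = maximizes sender expected utility $u_{\mathcal S}$ among schemes with $k$ signals. Independent instance: action $i$ has independent type over $j\in[m]$ with probability $q_{ij}$, receiver value $\rho_{ij}$, sender value $\xi_{ij}$. $\rho_E=\max_i\sum_jq_{ij}\rho_{ij}$; actions numbered so $\sum_jq_{nj}\rho_{nj}=\rho_E$ and action $n$ maximizes $\sum_jq_{ij}\xi_{ij}$ among actions with $\sum_jq_{ij}\rho_{ij}=\rho_E$. $\rho_E$-optimal: some optimal scheme with $k$ signals gives the receiver conditional expected utility at least $\rho_E$ for every signal sent with positive probability. $g_i(z)=\max\{\sum_jx_{ij}\xi_{ij}:\sum_jx_{ij}\le z,\ \sum_jx_{ij}\rho_{ij}\ge\rho_E\sum_jx_{ij},\ 0\le x_{ij}\le q_{ij}\}$; $f(S)=\max\{\sum_{i\in S\cup\{n\}}g_i(z_i):\sum_{i\in S\cup\{n\}}z_i\le1,z_i\ge0\}$. ActionsGreedy: start with $S=\emptyset$ and, $k-1$ times, add an action $i\in[n-1]\setminus S$ maximizing $f(S\cup\{i\})-f(S)$. *)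

(* Defs.v *)
From HB Require Import structures.
From mathcomp Require Import all_boot all_order all_algebra.
From mathcomp Require Import classical_sets reals.
Set Implicit Arguments. Unset Strict Implicit. Unset Printing Implicit Defensive.
Import Order.TTheory GRing.Theory Num.Theory.
Local Open Scope ring_scope.
Local Open Scope classical_set_scope.

Section Persuasion.
Variables (R : realType) (n m k : nat).
(* independent instance: action i has type j with prob q i j,
   receiver value rho i j, sender value xi i j *)
Variables (q rho xi : 'I_n -> 'I_m -> R).

(* states of nature: a type for every action *)
Definition state := {ffun 'I_n -> 'I_m}.

Definition prior (th : state) : R := \prod_(i < n) q i (th i).

(* a signaling scheme with k signals: phi th s = Pr[signal s | state th] *)
Definition scheme := state -> 'I_k -> R.

Definition valid_scheme (phi : scheme) : Prop :=
  (forall th s, 0 <= phi th s) /\ (forall th, \sum_(s < k) phi th s = 1).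

Definition sig_prob (phi : scheme) (s : 'I_k) : R :=
  \sum_(th : state) prior th * phi th s.

(* unnormalized (i.e. multiplied by Pr[s]) expected receiver / sender
   utility of action i when signal s is sent *)
Definition recv_val (phi : scheme) (s : 'I_k) (i : 'I_n) : R :=
  \sum_(th : state) prior th * phi th s * rho i (th i).
Definition send_val (phi : scheme) (s : 'I_k) (i : 'I_n) : R :=
  \sum_(th : state) prior th * phi th s * xi i (th i).

(* receiver best-responds, ties broken in favor of the sender: contribution
   of signal s to the sender's expected utility *)
Definition signal_util (phi : scheme) (s : 'I_k) : R :=
  sup [set send_val phi s i | i in
        [set i : 'I_n | forall j, recv_val phi s j <= recv_val phi s i]].

Definition sender_util (phi : scheme) : R := \sum_(s < k) signal_util phi s.

Definition optimal_scheme (phi : scheme) : Prop :=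
  valid_scheme phi /\ forall psi, valid_scheme psi -> sender_util psi <= sender_util phi.

Definition exp_rho (i : 'I_n) : R := \sum_(j < m) q i j * rho i j.
Definition exp_xi (i : 'I_n) : R := \sum_(j < m) q i j * xi i j.

Definition rhoE : R := sup (range exp_rho).

Definition rhoE_optimal : Prop :=
  exists phi, optimal_scheme phi /\
    forall s, 0 < sig_prob phi s ->
      exists i, rhoE * sig_prob phi s <= recv_val phi s i.

Definition g (i : 'I_n) (z : R) : R :=
  sup [set v | exists x : 'I_m -> R,
         (forall j, 0 <= x j <= q i j) /\
         \sum_(j < m) x j <= z /\
         rhoE * \sum_(j < m) x j <= \sum_(j < m) x j * rho i j /\
         v = \sum_(j < m) x j * xi i j].

(* f(S), where nl is the distinguished action n *)
Definition f (nl : 'I_n) (S : {set 'I_n}) : R :=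
  sup [set v | exists z : 'I_n -> R,
         (forall i, 0 <= z i) /\
         \sum_(i in S :|: [set nl]) z i <= 1 /\
         v = \sum_(i in S :|: [set nl]) g i (z i)].

(* A run of ActionsGreedy: the sequence s of the k-1 chosen actions, in order. *)
Definition actions_greedy (nl : 'I_n) (s : seq 'I_n) : Prop :=
  size s = k.-1 /\
  forall t, (t < k.-1)%N ->
    let St := [set x in take t s] in
    let a := nth nl s t in
    [/\ a != nl, a \notin St &
        forall i, i != nl -> i \notin St ->
          f nl (St :|: [set i]) - f nl St <= f nl (St :|: [set a]) - f nl St].

End Persuasion.

(* Main.v *)
Require Import Defs.
From HB Require Import structures.
From mathcomp Require Import all_boot all_order all_algebra.
From mathcomp Require Import boolp classical_sets reals.
From mathcomp Require Import ring lra.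
Set Implicit Arguments. Unset Strict Implicit. Unset Printing Implicit Defensive.
Import Order.TTheory GRing.Theory Num.Theory.
Local Open Scope ring_scope.
Local Open Scope classical_set_scope.

Section SupH.
Variable R : realType.
Lemma sup_ge_el (E : set R) M x : (forall v, E v -> v <= M) -> E x -> x <= sup E.
Proof. by move=> HM Ex; apply: ub_le_sup => //; exists M. Qed.
Lemma sup_le_M (E : set R) M : (exists x, E x) -> (forall v, E v -> v <= M) -> sup E <= M.
Proof. by move=> [x Ex] HM; apply: ge_sup => //; exists x. Qed.
Lemma sup_le0 (E : set R) M : 0 <= M -> (forall v, E v -> v <= M) -> sup E <= M.
Proof.
move=> M0 HM; case: (pselect (exists x, E x)) => [ne|ne]; first exact: sup_le_M.
have -> : E = set0 by apply/seteqP; split => x // Ex; apply: ne; exists x.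
by rewrite sup0.
Qed.
Lemma sup_approx (E : set R) M e : (exists x, E x) -> (forall v, E v -> v <= M) ->
  0 < e -> exists v, E v /\ sup E - e < v.
Proof.
move=> ne HM e0; have hs : has_sup E.
  by split; [case: ne => x Ex; exists x | exists M].
by case: (sup_adherent e0 hs) => v Ev Hv; exists v.
Qed.
Lemma le_eps (x y : R) : (forall e, 0 < e -> x <= y + e) -> x <= y.
Proof.
move=> H; rewrite leNgt; apply/negP => Hlt.
have := H ((x - y) / 2%:R); rewrite divr_gt0 ?subr_gt0 ?ltr0Sn // => /(_ isT).
lra.
Qed.
End SupH.
Section Gen.
Variable R : realType.
Definition pp (x : R) := if 0 <= x then x else 0.
Lemma pp_ge0 x : 0 <= pp x. Proof. by rewrite /pp; case: ifP => // /negbT; rewrite -ltNge => /ltW. Qed.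
Lemma pp_ge x : x <= pp x. Proof. by rewrite /pp; case: ifP => // /negbT; rewrite -ltNge => /ltW. Qed.
Lemma ppP x : (0 <= x /\ pp x = x) \/ (x < 0 /\ pp x = 0).
Proof. by rewrite /pp; case: ifP => H; [left|right; rewrite ltNge H]. Qed.
Lemma pp_sum (I : finType) (A : {set I}) (z : I -> R) e : e <= 0 -> (forall i, 0 <= z i) ->
  \sum_(i in A) pp (e + z i) <= pp (e + \sum_(i in A) z i).
Proof.
move=> e0 z0.
pose K := fun a b : R => a <= pp (e + b) /\ 0 <= b.
suff [] : K (\sum_(i in A) pp (e + z i)) (\sum_(i in A) z i) by [].
apply: (big_rec2 K); first by split; [apply: pp_ge0|].
move=> i a b _ [h1 h2]; split; last by rewrite addr_ge0.
have zi := z0 i.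
have P1 := ppP (e + z i); have P2 := ppP (e + b); have P3 := ppP (e + (z i + b)).
case: P1 => [[? ->]|[? ->]]; case: P2 => [[? E2]|[? E2]]; rewrite E2 in h1;
  case: P3 => [[? ->]|[? ->]]; lra.
Qed.
Lemma le_eps_c (x y c : R) : 0 <= c -> (forall e, 0 < e -> x <= y + c * e) -> x <= y.
Proof.
move=> c0 H; apply: le_eps => e e0.
have c1 : 0 < c + 1 by lra.
have := H (e / (c + 1)); rewrite divr_gt0 // => /(_ isT) /le_trans; apply.
rewrite lerD2l mulrA ler_pdivrMr // mulrDr mulr1 mulrC lerDl; exact: ltW.
Qed.
End Gen.
Section Arith.
Variable R : realType.
Lemma sum_arith (I : finType) (T : {set I}) (gg th FF : I -> R) (Y Z fS eps : R) :
  (forall i, i \in T -> gg i - th i * (Y - Z) - (fS - Y) <= FF i - fS) ->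
  \sum_(i in T) th i <= 1 -> Z <= Y -> fS - eps < Y -> Y <= fS ->
  Z + \sum_(i in T) gg i - fS <= \sum_(i in T) (FF i - fS) + #|T|%:R * eps.
Proof.
move=> step thS HYZ HYf HYle.
have : \sum_(i in T) (gg i - th i * (Y - Z) - (fS - Y)) <=
    \sum_(i in T) (FF i - fS) by apply: ler_sum.
rewrite !sumrB -mulr_suml !sumr_const => Hs.
have h1 : (\sum_(i in T) th i) * (Y - Z) <= Y - Z by rewrite ler_piMl // subr_ge0.
have h2 : fS *+ #|T| - Y *+ #|T| <= eps *+ #|T|.
  by rewrite -mulrnBl lerMn2r; apply/orP; right; lra.
rewrite mulr_natl.
move: Hs h1 h2.
move: ((\sum_(i in T) th i) * (Y - Z)) => A.
move: (fS *+ #|T|) => B1.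
move: (Y *+ #|T|) => B2.
move: (eps *+ #|T|) => C.
move: (\sum_(i in T) FF i) => E.
move: (\sum_(i in T) gg i) => G.
lra.
Qed.
End Arith.
Section Main.
Variables (R : realType) (n m k : nat) (q rho xi : 'I_n -> 'I_m -> R).
Hypothesis Hq0 : forall i j, 0 <= q i j.

Definition Gset i z := [set v | exists x : 'I_m -> R,
         (forall j, 0 <= x j <= q i j) /\
         \sum_(j < m) x j <= z /\
         rhoE q rho * \sum_(j < m) x j <= \sum_(j < m) x j * rho i j /\
         v = \sum_(j < m) x j * xi i j].
Lemma gE i z : g q rho xi i z = sup (Gset i z). Proof. by []. Qed.

Definition B i := \sum_(j < m) q i j * `|xi i j|.
Lemma B_ge0 i : 0 <= B i.
Proof. by apply: sumr_ge0 => j _; rewrite mulr_ge0. Qed.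
Lemma Gset_ub i z v : Gset i z v -> v <= B i.
Proof.
case=> x [Hx [_ [_ ->]]]; apply: ler_sum => j _.
have /andP[x0 xq] := Hx j.
apply: (le_trans (y := x j * `|xi i j|)).
  by rewrite ler_wpM2l // real_ler_norm // num_real.
by rewrite ler_wpM2r.
Qed.
Lemma g_le_B i z : g q rho xi i z <= B i.
Proof. by rewrite gE; apply: sup_le0 (B_ge0 i) (@Gset_ub i z). Qed.
Lemma Gset0 i z : 0 <= z -> Gset i z 0.
Proof.
move=> z0; exists (fun _ => 0); split; first by move=> j; rewrite lexx Hq0.
by rewrite !big1 ?mulr0 // => j _; rewrite mul0r.
Qed.
Lemma g_elem i z v : Gset i z v -> v <= g q rho xi i z.
Proof. by move=> Hv; rewrite gE; apply: sup_ge_el (@Gset_ub i z) Hv. Qed.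
Lemma g_ge0 i z : 0 <= z -> 0 <= g q rho xi i z.
Proof. by move=> z0; apply: g_elem; apply: Gset0. Qed.
Lemma g0 i : g q rho xi i 0 = 0.
Proof.
apply/eqP; rewrite eq_le g_ge0 // andbT gE; apply: sup_le0 => // v.
case=> x [Hx [Hs [_ ->]]].
have x0 : forall j, x j = 0.
  move=> j; apply/eqP; rewrite eq_le; have /andP[-> _] := Hx j; rewrite andbT.
  apply: le_trans Hs; rewrite (bigD1 j) //= lerDl; apply: sumr_ge0 => l _.
  by have /andP[] := Hx l.
by rewrite big1 // => j _; rewrite x0 mul0r.
Qed.

Lemma g_concave i a b t : 0 <= a -> 0 <= b -> 0 <= t <= 1 ->
  (1 - t) * g q rho xi i a + t * g q rho xi i b <= g q rho xi i ((1 - t) * a + t * b).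
Proof.
move=> a0 b0 /andP[t0 t1].
have t1' : 0 <= 1 - t by rewrite subr_ge0.
apply: le_eps => e e0.
have [va [[xa [Hxa [Hsa [Hra ->]]]] Hva]] :=
  sup_approx (ex_intro _ _ (Gset0 i a0)) (@Gset_ub i a) e0.
have [vb [[xb [Hxb [Hsb [Hrb ->]]]] Hvb]] :=
  sup_approx (ex_intro _ _ (Gset0 i b0)) (@Gset_ub i b) e0.
rewrite -!gE in Hva Hvb.
pose c := (1 - t) * a + t * b.
have Hel : Gset i c ((1 - t) * \sum_j xa j * xi i j + t * \sum_j xb j * xi i j).
  exists (fun j => (1 - t) * xa j + t * xb j); split; [|split; [|split]].
  - move=> j; have /andP[a1 a2] := Hxa j; have /andP[b1 b2] := Hxb j.
    apply/andP; split; first by rewrite addr_ge0 // mulr_ge0.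
    apply: (le_trans (y := (1 - t) * q i j + t * q i j)).
      by rewrite lerD // ler_wpM2l.
    by rewrite -mulrDl subrK mul1r.
  - rewrite /= big_split /= -!mulr_sumr; rewrite lerD // ler_wpM2l //.
  - rewrite /= big_split /= -!mulr_sumr mulrDr.
    have -> : \sum_j ((1 - t) * xa j + t * xb j) * rho i j =
      (1 - t) * \sum_j xa j * rho i j + t * \sum_j xb j * rho i j.
      by rewrite !mulr_sumr -big_split /=; apply: eq_bigr => j _; rewrite mulrDl !mulrA.
    by rewrite (mulrCA (rhoE q rho) (1 - t)) (mulrCA (rhoE q rho) t) lerD // ler_wpM2l.
  - by rewrite !mulr_sumr -big_split /=; apply: eq_bigr => j _; rewrite [RHS]mulrDl !mulrA.
have := g_elem Hel.
have := ler_wpM2l t1' (ltW Hva); have := ler_wpM2l t0 (ltW Hvb).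
have : 0 <= 1 - t + t by lra.
move=> _ h1 h2 h3.
have : (1 - t) * (g q rho xi i a - e) + t * (g q rho xi i b - e) <= g q rho xi i c.
  exact: le_trans (lerD h2 h1) h3.
rewrite !mulrBr; lra.
Qed.
Variable nl : 'I_n.
Definition Fset (S : {set 'I_n}) := [set v | exists z : 'I_n -> R,
  (forall i, 0 <= z i) /\ (forall i, i \notin S :|: [set nl] -> z i = 0) /\
  \sum_i z i <= 1 /\ v = \sum_i g q rho xi i (z i)].

Lemma fE S : f q rho xi nl S = sup (Fset S).
Proof.
rewrite /f; congr sup; apply/seteqP; split => v.
  case=> z [z0 [Hs ->]].
  exists (fun i => if i \in S :|: [set nl] then z i else 0); split; [|split; [|split]].
  - by move=> i; case: ifP.
  - by move=> i /negbTE ->.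
  - by rewrite -big_mkcond.
  - rewrite [LHS]big_mkcond; apply: eq_bigr => i _; case: ifP => // _.
    by rewrite g0.
case=> z [z0 [zs [Hs ->]]]; exists z; split => //; split.
  rewrite big_mkcond; apply: le_trans Hs; apply: ler_sum => i _.
  by case: ifP => // /negbT /zs ->.
rewrite [RHS]big_mkcond; apply: eq_bigr => i _; case: ifP => // /negbT /zs ->.
by rewrite g0.
Qed.

Definition BF := \sum_i B i.
Lemma Fset_ub S v : Fset S v -> v <= BF.
Proof. by case=> z [_ [_ [_ ->]]]; apply: ler_sum => i _; apply: g_le_B. Qed.
Lemma Fset0 S : Fset S 0.
Proof.
exists (fun _ => 0); split => //; split => //; split; first by rewrite big1.
by rewrite big1 // => i _; rewrite g0.
Qed.
Lemma f_elem S v : Fset S v -> v <= f q rho xi nl S.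
Proof. by move=> Hv; rewrite fE; apply: sup_ge_el (@Fset_ub S) Hv. Qed.
Lemma f_ge0 S : 0 <= f q rho xi nl S.
Proof. exact: f_elem (Fset0 S). Qed.
Lemma f_le S M : (forall v, Fset S v -> v <= M) -> f q rho xi nl S <= M.
Proof. by move=> H; rewrite fE; apply: sup_le_M H; exists 0; apply: Fset0. Qed.
Lemma f_mono (S S' : {set 'I_n}) : S \subset S' -> f q rho xi nl S <= f q rho xi nl S'.
Proof.
move=> sub; apply: f_le => v [z [z0 [zs [Hs ->]]]]; apply: f_elem.
exists z; split => //; split => // i Hi; apply: zs; apply: contra Hi.
by rewrite !inE => /orP[/(fintype.subsetP sub) ->|->] //; rewrite orbT.
Qed.
Lemma f_approx S e : 0 < e -> exists z : 'I_n -> R,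
  [/\ (forall i, 0 <= z i), (forall i, i \notin S :|: [set nl] -> z i = 0),
      \sum_i z i <= 1 & f q rho xi nl S - e < \sum_i g q rho xi i (z i)].
Proof.
move=> e0; have [v [[z [z0 [zs [Hs ->]]]] Hv]] :=
  sup_approx (ex_intro _ _ (Fset0 S)) (@Fset_ub S) e0.
by exists z; split => //; rewrite fE.
Qed.
Lemma sum_ind (i : 'I_n) (x : R) : \sum_j (if j == i then x else 0) = x.
Proof. by rewrite -big_mkcond /= big_pred1_eq. Qed.

Lemma step_add (S : {set 'I_n}) (i : 'I_n) (y zP : 'I_n -> R) (c th : R) :
  i \notin S :|: [set nl] ->
  (forall j, 0 <= y j) -> (forall j, j \notin S :|: [set nl] -> y j = 0) ->
  (forall j, 0 <= zP j) -> (forall j, j \notin S :|: [set nl] -> zP j = 0) ->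
  0 <= c -> 0 <= th <= 1 ->
  (1 - th) * \sum_j y j + th * \sum_j zP j + c <= 1 ->
  (1 - th) * \sum_j g q rho xi j (y j) + th * \sum_j g q rho xi j (zP j) + g q rho xi i c
    <= f q rho xi nl (S :|: [set i]).
Proof.
move=> iP y0 ys z0 zs c0 /andP[th0 th1] Hb.
have th1' : 0 <= 1 - th by rewrite subr_ge0.
pose w := fun j => (1 - th) * y j + th * zP j + (if j == i then c else 0).
have w0 : forall j, 0 <= w j.
  by move=> j; rewrite /w !addr_ge0 ?mulr_ge0 //; case: ifP.
apply: le_trans (f_elem (v := \sum_j g q rho xi j (w j)) _); last first.
  exists w; split => //; split.
    move=> j; rewrite !inE negb_or => /andP[]; rewrite negb_or => /andP[H1 H2] H3.
    have jP : j \notin S :|: [set nl] by rewrite !inE negb_or H1 H3.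
    by rewrite /w ys // zs // (negbTE H2) !mulr0 !addr0.
  split => //.
  rewrite /w big_split big_split /= -!mulr_sumr sum_ind; exact: Hb.
rewrite -(sum_ind i (g q rho xi i c)) !mulr_sumr -!big_split /=.
apply: ler_sum => j _; rewrite /w; case: eqP => [->|_].
  rewrite ys // zs // !mulr0 !g0 !mulr0 !add0r; exact: lexx.
rewrite !addr0; apply: g_concave => //; exact/andP.
Qed.
Lemma keyK (S U : {set 'I_n}) (z : 'I_n -> R) :
  nl \notin U -> (forall i, 0 <= z i) ->
  (forall i, i \notin U :|: [set nl] -> z i = 0) -> \sum_i z i <= 1 ->
  \sum_i g q rho xi i (z i) - f q rho xi nl S <=
  \sum_(i in U :\: S) (f q rho xi nl (S :|: [set i]) - f q rho xi nl S).
Proof.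
move=> nlU z0 zs zb.
set P := S :|: [set nl]; set T := U :\: S.
have TP : forall i, i \in T -> i \notin P.
  move=> i; rewrite !inE => /andP[iS iU]; rewrite negb_or iS /=.
  by apply: contra nlU => /eqP <-.
have tri : forall j, [\/ j \in P /\ j \notin T, j \notin P /\ j \in T |
                        [/\ j \notin P, j \notin T & z j = 0]].
  move=> j; case jP: (j \in P).
    by constructor 1; split => //; apply: contraT; rewrite negbK => /TP; rewrite jP.
  case jT: (j \in T); first by constructor 2.
  constructor 3; split => //; apply: zs; move: jP jT; rewrite /P /T !inE.
  by case: (j \in S); case: (j \in U); case: (j == nl).
pose zP j := if j \in P then z j else 0.
have zP0 : forall j, 0 <= zP j by move=> j; rewrite /zP; case: ifP.
have zPs : forall j, j \notin P -> zP j = 0 by move=> j /negbTE; rewrite /zP => ->.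
have zsplit : forall j, z j = zP j + (if j \in T then z j else 0).
  move=> j; rewrite /zP; case: (tri j) => [[-> /negbTE ->]|[/negbTE -> ->]|[/negbTE -> /negbTE -> ->]];
    by rewrite ?addr0 ?add0r.
have gsplit : forall j, g q rho xi j (z j) =
    g q rho xi j (zP j) + (if j \in T then g q rho xi j (z j) else 0).
  move=> j; rewrite /zP; case: (tri j) => [[-> /negbTE ->]|[/negbTE -> ->]|[/negbTE -> /negbTE -> ->]];
    by rewrite ?addr0 ?g0 ?add0r.
set sz := \sum_j zP j; set Z := \sum_j g q rho xi j (zP j).
set zT := \sum_(i in T) z i; set gT := \sum_(i in T) g q rho xi i (z i).
have Hsz : sz + zT = \sum_j z j.
  rewrite [RHS](eq_bigr _ (fun j _ => zsplit j)) big_split /=; congr (_ + _).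
  by rewrite /zT big_mkcond.
have Hsg : Z + gT = \sum_j g q rho xi j (z j).
  rewrite [RHS](eq_bigr _ (fun j _ => gsplit j)) big_split /=; congr (_ + _).
  by rewrite /gT big_mkcond.
have zT0 : 0 <= zT by apply: sumr_ge0.
have sz0 : 0 <= sz by apply: sumr_ge0.
have ZleF : Z <= f q rho xi nl S.
  apply: f_elem; exists zP; split => //; split => //; split => //; rewrite -/sz; lra.
rewrite -Hsg.
apply: (@le_eps_c _ _ _ (#|T|%:R)) => // eps eps0.
have [y [y0 ys yb HYZ [HYf HYle]]] : exists y : 'I_n -> R,
    [/\ (forall j, 0 <= y j), (forall j, j \notin P -> y j = 0), \sum_j y j <= 1,
     Z <= \sum_j g q rho xi j (y j) & f q rho xi nl S - eps < \sum_j g q rho xi j (y j)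
     /\ \sum_j g q rho xi j (y j) <= f q rho xi nl S].
  have [y0 [y00 y0s y0b Hy0]] := f_approx S eps0.
  case: (lerP Z (\sum_j g q rho xi j (y0 j))) => HZ.
    exists y0; split => //; split; [lra|]; apply: f_elem; exists y0; split => //.
  exists zP; split => //; [rewrite -/sz; lra | split; [rewrite -/Z; lra | exact: ZleF]].
set Y := \sum_j g q rho xi j (y j) in HYZ HYf HYle *; set sy := \sum_j y j in yb *.
pose D := sy - sz; pose ee := sy - 1.
pose th i := if 0 < D then pp (ee + z i) / D else 0.
have zTi : forall i, i \in T -> z i <= zT.
  by move=> i iT; rewrite /zT (bigD1 i) //= lerDl; apply: sumr_ge0.
have ppD : forall x, x <= D -> 0 <= D -> pp x <= D.
  by move=> x h1 h2; case: (ppP x) => [[_ ->]|[_ ->]].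
have thP : forall i, i \in T -> 0 <= th i <= 1 /\ (1 - th i) * sy + th i * sz + z i <= 1.
  move=> i iT; have zTi' := zTi i iT; have zi := z0 i; rewrite /th; case: ifP => HD.
    have Dn : D != 0 by rewrite gt_eqF.
    have hp : pp (ee + z i) <= D by apply: ppD; [rewrite /ee /D; lra | exact: ltW].
    split.
      rewrite divr_ge0 ?pp_ge0 //=; last exact: ltW.
      by rewrite ler_pdivrMr // mul1r.
    have -> : (1 - pp (ee + z i) / D) * sy + pp (ee + z i) / D * sz + z i =
        sy - pp (ee + z i) / D * D + z i by rewrite /D; ring.
    rewrite divfK //; have := pp_ge (ee + z i); rewrite /ee; lra.
  move/negbT: HD; rewrite -leNgt /D => HD; split; first by rewrite lexx ler01.
  rewrite subr0 mul1r mul0r addr0; lra.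
have thS : \sum_(i in T) th i <= 1.
  have [HD|HD] := ltrP 0 D; last first.
    by rewrite big1 ?ler01 // => i _; rewrite /th ltNge HD.
  under eq_bigr => i _ do rewrite /th HD.
  rewrite -mulr_suml ler_pdivrMr // mul1r.
  apply: le_trans (@pp_sum _ _ T z ee _ z0) _; first by rewrite /ee; lra.
  by apply: ppD; [rewrite -/zT /ee /D; lra | apply: ltW].
have step : forall i, i \in T ->
    g q rho xi i (z i) - th i * (Y - Z) - (f q rho xi nl S - Y) <=
    f q rho xi nl (S :|: [set i]) - f q rho xi nl S.
  move=> i iT; have [/andP[t0 t1] Hb] := thP i iT.
  have := step_add (TP i iT) y0 ys zP0 zPs (z0 i) (introT andP (conj t0 t1)) Hb.
  rewrite -/Y -/Z; move=> h.
  have e : (1 - th i) * Y + th i * Z = Y - th i * (Y - Z) by ring.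
  rewrite e in h; move: (th i * (Y - Z)) h => A h; lra.
exact: (sum_arith step thS HYZ HYf HYle).
Qed.
Hypothesis Hq1 : forall i, \sum_(j < m) q i j = 1.

Lemma sum_indic (I : finType) (a : I) (X : I -> R) :
  \sum_j (a == j)%:R * X j = X a.
Proof.
rewrite (bigD1 a) //= eqxx mul1r big1 ?addr0 // => j ja.
by rewrite eq_sym (negbTE ja) mul0r.
Qed.

Lemma prior_ge0 th : 0 <= prior q th.
Proof. by apply: prodr_ge0 => i _. Qed.

Lemma marg a j : \sum_(th : state n m) (th a == j)%:R * prior q th = q a j.
Proof.
pose F := fun (i : 'I_n) (t : 'I_m) => if i == a then (j == t)%:R * q i t else q i t.
have := @bigA_distr_bigA R 0 1 *%R +%R _ _ F.
rewrite (bigD1 a) //= /F ?eqxx sum_indic big1 ?mulr1; last first.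
  by move=> i ia; rewrite (negbTE ia) Hq1.
move=> ->; apply: eq_bigr => th _.
rewrite [RHS](bigD1 a) //= eqxx /prior (bigD1 a) //= mulrA eq_sym; congr (_ * _).
by apply: eq_bigr => i ia; rewrite (negbTE ia).
Qed.

Lemma prior_sum : \sum_(th : state n m) prior q th = 1.
Proof.
have := @bigA_distr_bigA R 0 1 *%R +%R _ _ q.
by rewrite big1 // => i _; rewrite Hq1.
Qed.

Lemma Msum (F : state n m -> R) (c : 'I_m -> R) a :
  \sum_j (\sum_(th : state n m) (th a == j)%:R * F th) * c j = \sum_th F th * c (th a).
Proof.
under eq_bigr => j _ do rewrite mulr_suml.
rewrite exchange_big /=; apply: eq_bigr => th _.
rewrite -(sum_indic (th a) (fun j => F th * c j)) /=.
by apply: eq_bigr => j _; rewrite mulrA.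
Qed.
Lemma fin_max (I : finType) (P : pred I) (F : I -> R) i0 : P i0 ->
  exists i, P i /\ forall j, P j -> F j <= F i.
Proof. by move=> Pi0; case: (arg_maxP F Pi0) => i Pi H; exists i. Qed.

Lemma sig_attain (psi : scheme R n m k) s : exists i,
  (forall j, recv_val q rho psi s j <= recv_val q rho psi s i) /\
  signal_util q rho xi psi s = send_val q xi psi s i.
Proof.
have [i0 [_ H0]] := @fin_max _ predT (recv_val q rho psi s) nl isT.
pose P := fun i => [forall j, recv_val q rho psi s j <= recv_val q rho psi s i].
have Pi0 : P i0 by apply/forallP => j; apply: H0.
have [i [Pi Hi]] := @fin_max _ P (send_val q xi psi s) i0 Pi0.
have Pi' : forall j, recv_val q rho psi s j <= recv_val q rho psi s i.
  by move=> j; move/forallP: Pi; apply.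
exists i; split => //.
rewrite /signal_util; apply/eqP; rewrite eq_le; apply/andP; split.
  apply: ge_sup; first by exists (send_val q xi psi s i); exists i.
  move=> v [j Hj <-]; apply: Hi; apply/forallP => l; exact: Hj.
apply: ub_le_sup; last by exists i.
exists (send_val q xi psi s i) => v [j Hj <-]; apply: Hi; apply/forallP => l; exact: Hj.
Qed.
Lemma optK (psi : scheme R n m k) : valid_scheme psi ->
  (forall s, 0 < sig_prob q psi s ->
     exists i, rhoE q rho * sig_prob q psi s <= recv_val q rho psi s i) ->
  exists (U : {set 'I_n}) (z : 'I_n -> R), [/\ nl \notin U, (#|U| <= k)%N, (forall i, 0 <= z i),
     (forall i, i \notin U :|: [set nl] -> z i = 0) &
     \sum_i z i <= 1 /\ sender_util q rho xi psi <= \sum_i g q rho xi i (z i)].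
Proof.
move=> [ps0 ps1] Hopt.
have [io Hio] := fin_all_exists (sig_attain psi).
pose U := [set io s | s in 'I_k] :\ nl.
pose P s := sig_prob q psi s.
have P0 : forall s, 0 <= P s.
  by move=> s; apply: sumr_ge0 => th _; rewrite mulr_ge0 ?prior_ge0.
pose z := fun a : 'I_n => \sum_s (io s == a)%:R * P s.
pose Fa := fun (a : 'I_n) (th : state n m) => \sum_s (io s == a)%:R * (prior q th * psi th s).
pose x := fun (a : 'I_n) (j : 'I_m) => \sum_(th : state n m) (th a == j)%:R * Fa a th.
have Fa0 : forall a th, 0 <= Fa a th.
  by move=> a th; apply: sumr_ge0 => s _; rewrite !mulr_ge0 ?ler0n ?prior_ge0.
have FaP : forall a th, Fa a th <= prior q th.
  move=> a th; rewrite -[leRHS]mulr1 -(ps1 th) mulr_sumr; apply: ler_sum => s _.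
  by case: eqP => _; rewrite ?mul1r ?mul0r // mulr_ge0 ?prior_ge0.
have xsum : forall a, \sum_j x a j = z a.
  move=> a; transitivity (\sum_j x a j * 1); first by apply: eq_bigr => j _; rewrite mulr1.
  rewrite Msum; under eq_bigr do rewrite mulr1.
  by rewrite /Fa exchange_big /=; apply: eq_bigr => s _; rewrite mulr_sumr.
have xval : forall a (c : 'I_n -> 'I_m -> R), \sum_j x a j * c a j =
    \sum_s (io s == a)%:R * \sum_th prior q th * psi th s * c a (th a).
  move=> a c; rewrite Msum /Fa; under eq_bigr do rewrite mulr_suml.
  rewrite exchange_big /=; apply: eq_bigr => s _; rewrite mulr_sumr.
  by apply: eq_bigr => th _; rewrite !mulrA.
have Hrv : forall s, rhoE q rho * P s <= recv_val q rho psi s (io s).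
  move=> s; case: (ltrP 0 (P s)) => HP.
    by have [i Hi] := Hopt s HP; apply: le_trans Hi ((Hio s).1 i).
  have HP0 : P s = 0 by apply/eqP; rewrite eq_le HP P0.
  have Z0 := psumr_eq0P (fun th _ => mulr_ge0 (prior_ge0 th) (ps0 th s)) HP0.
  by rewrite HP0 mulr0 /recv_val big1 // => th _; rewrite Z0 // mul0r.
have Ha : forall a, \sum_s (io s == a)%:R * send_val q xi psi s a <= g q rho xi a (z a).
  move=> a; apply: g_elem; exists (x a); split; [|split; [|split]].
  - move=> j; apply/andP; split.
      by apply: sumr_ge0 => th _; rewrite mulr_ge0 ?ler0n.
    rewrite -marg; apply: ler_sum => th _; by rewrite ler_wpM2l ?ler0n // FaP.
  - by rewrite xsum.
  - rewrite xsum (xval a rho) /z mulr_sumr; apply: ler_sum => s _.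
    by case: eqP => [<-|_]; rewrite ?mul1r ?mul0r ?mulr0 //; apply: Hrv.
  - by rewrite (xval a xi).
exists U, z; split.
- by rewrite !inE eqxx.
- apply: leq_trans (subset_leq_card (finset.subD1set _ _)) _.
  by apply: leq_trans (leq_imset_card _ _) _; rewrite card_ord.
- by move=> a; apply: sumr_ge0 => s _; rewrite mulr_ge0 ?ler0n.
- move=> a Ha'; rewrite /z big1 // => s _; case: eqP => [Es|]; last by rewrite mul0r.
  move: Ha'; rewrite !inE -Es; case: eqP => //= _.
  by rewrite imset_f.
split.
  rewrite /z exchange_big /=.
  under eq_bigr => s _ do rewrite (sum_indic (io s) (fun _ => P s)).
  rewrite /P /sig_prob exchange_big /=.
  under eq_bigr => th _ do rewrite -mulr_sumr ps1 mulr1.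
  by rewrite prior_sum.
rewrite /sender_util.
under eq_bigr => s _ do rewrite (Hio s).2 -(sum_indic (io s) (send_val q xi psi s)).
rewrite exchange_big /=; apply: ler_sum => a _; exact: Ha.
Qed.
Lemma set_take_rcons (l : seq 'I_n) a : [set x in rcons l a] = [set x in l] :|: [set a].
Proof. by apply/setP => x; rewrite !inE mem_rcons in_cons orbC. Qed.

Lemma greedy_bound (s : seq 'I_n) (U : {set 'I_n}) (z : 'I_n -> R) :
  (1 <= k)%N -> actions_greedy k q rho xi nl s ->
  nl \notin U -> (#|U| <= k)%N -> (forall i, 0 <= z i) ->
  (forall i, i \notin U :|: [set nl] -> z i = 0) -> \sum_i z i <= 1 ->
  forall t, (t <= k.-1)%N ->
  \sum_i g q rho xi i (z i) - f q rho xi nl [set x in take t s] <=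
  (1 - k%:R^-1) ^+ t * (\sum_i g q rho xi i (z i) - f q rho xi nl finset.set0).
Proof.
move=> k1 [Hsz Hgr] nlU Uk z0 zs zb.
set V := \sum_i g q rho xi i (z i).
have kpos : (0 : R) < k%:R by rewrite ltr0n.
have c0 : 0 <= 1 - (k%:R : R)^-1.
  by rewrite subr_ge0 invf_le1 // ler1n.
elim=> [|t IH] Ht.
  have -> : [set x in take 0 s] = finset.set0 by rewrite take0; apply/setP => x; rewrite !inE.
  by rewrite expr0 mul1r.
have tlt : (t < k.-1)%N by [].
have IH' := IH (ltnW tlt).
have [anl aS Hmax] := Hgr t tlt.
set St := [set x in take t s] in IH' anl aS Hmax *.
set a := nth nl s t in anl aS Hmax *.
rewrite (take_nth nl) ?Hsz // set_take_rcons -/St -/a.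
set D := f q rho xi nl (St :|: [set a]) - f q rho xi nl St in Hmax *.
have D0 : 0 <= D by rewrite /D subr_ge0; apply: f_mono; apply: finset.subsetUl.
have K := keyK St nlU z0 zs zb.
have H2 : \sum_(i in U :\: St) (f q rho xi nl (St :|: [set i]) - f q rho xi nl St)
    <= k%:R * D.
  apply: (le_trans (y := \sum_(i in U :\: St) D)).
    apply: ler_sum => i /setDP [iU iS]; apply: Hmax; last exact: iS.
    by apply: contra nlU => /eqP <-.
  rewrite sumr_const mulr_natl; apply: ler_wpMn2l => //.
  by apply: leq_trans (subset_leq_card (finset.subsetDl _ _)) Uk.
have HD : k%:R^-1 * (V - f q rho xi nl St) <= D.
  by rewrite ler_pdivrMl //; apply: le_trans K H2.
rewrite exprS -mulrA.
apply: le_trans (ler_wpM2l c0 IH').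
have -> : V - f q rho xi nl (St :|: [set a]) = V - f q rho xi nl St - D by rewrite /D; ring.
move: HD; rewrite mulrBl mul1r.
move: (k%:R^-1 * (V - f q rho xi nl St)) => A; lra.
Qed.
Lemma final (phi : scheme R n m k) (s : seq 'I_n) : (2 <= k)%N ->
  rhoE_optimal k q rho xi -> optimal_scheme q rho xi phi ->
  actions_greedy k q rho xi nl s ->
  #|[set x in s]| = k.-1 /\
  (1 - (1 - k%:R^-1) ^+ k.-1) * sender_util q rho xi phi <= f q rho xi nl [set x in s].
Proof.
move=> k2 HE Hphi Hs.
have k1 : (1 <= k)%N by apply: leq_trans k2.
split.
  case: Hs => Hsz Hgr.
  have Hu : forall t, (t <= size s)%N -> uniq (take t s).
    elim=> [|t IH] Ht; first by rewrite take0.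
    rewrite (take_nth nl) // rcons_uniq IH ?(ltnW Ht) // andbT.
    have tl : (t < k.-1)%N by rewrite -Hsz.
    have [_ aS _] := Hgr t tl.
    by move: aS; rewrite inE.
  have := Hu _ (leqnn _); rewrite take_size => /card_uniqP.
  by rewrite cardsE Hsz.
case: HE => psi [[Hpv Hpo] Hpr].
have [U [z [nlU Uk z0 zs [zb Hu]]]] := optK Hpv Hpr.
have := greedy_bound k1 Hs nlU Uk z0 zs zb (leqnn _).
case: (Hs) => Hsz _; rewrite -Hsz take_size Hsz.
set c := (1 - k%:R^-1) ^+ k.-1.
set V := \sum_i g q rho xi i (z i).
have kpos : (0 : R) < k%:R by rewrite ltr0n.
have c0' : 0 <= 1 - (k%:R : R)^-1 by rewrite subr_ge0 invf_le1 // ler1n.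
have c1' : 1 - (k%:R : R)^-1 <= 1 by rewrite lerBlDr lerDl invr_ge0 ler0n.
have c0 : 0 <= c by apply: exprn_ge0.
have c1 : c <= 1 by apply: exprn_ile1.
have f0 := f_ge0 finset.set0.
have Hle : sender_util q rho xi phi <= V.
  apply: le_trans Hu; apply: Hpo; exact: Hphi.1.
move=> H.
have H' : c * (V - f q rho xi nl finset.set0) <= c * V.
  by rewrite ler_wpM2l // lerBlDr lerDl.
have H3 : (1 - c) * sender_util q rho xi phi <= (1 - c) * V.
  by rewrite ler_wpM2l // subr_ge0.
move: H H' H3; rewrite !mulrBl !mul1r.
move: (c * V) => cV; move: (c * (V - f q rho xi nl finset.set0)) => cW.
move: (c * sender_util q rho xi phi) => cS; lra.
Qed.
End Main.

Local Close Scope classical_set_scope.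

Theorem lemma4p4 (R : realType) (n m k : nat) (q rho xi : 'I_n -> 'I_m -> R)
  (nl : 'I_n)
  (Hq0 : forall i j, 0 <= q i j)
  (Hq1 : forall i, \sum_(j < m) q i j = 1)
  (Hk : (2 <= k <= n)%N)
  (Hnl : nat_of_ord nl = n.-1)
  (HnlE : exp_rho q rho nl = rhoE q rho)
  (HnlX : forall i, exp_rho q rho i = rhoE q rho -> exp_xi q xi i <= exp_xi q xi nl)
  (HE : rhoE_optimal k q rho xi)
  (phi : scheme R n m k) (Hphi : optimal_scheme q rho xi phi)
  (s : seq 'I_n) (Hs : actions_greedy k q rho xi nl s) :
  #|[set x in s]| = k.-1 /\
  (1 - (1 - k%:R^-1) ^+ k.-1) * sender_util q rho xi phi <= f q rho xi nl [set x in s].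
Proof.
case/andP: Hk => k2 _.
exact: (final Hq0 Hq1 k2 HE Hphi Hs).
Qed.
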